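(* Let $a,b,g,m,n>0$ and $0<e<1$, and consider the planar system $$\dot x=a-ex-\frac{xy}{1+gy},\qquad \dot y=\frac{xy}{1+gy}-y-\frac{my}{b+ny}.$$ Let $a_1=(eg+1)n$, $a_2=(b+m)(eg+1)+n(e-a)$, $a_3=e(b+m)-ab$, $\Delta=a_2^2-4a_1a_3$, $$a_4=\frac{[en-(b-m)(eg+1)]+\sqrt{4m(eg+1)[ne-b(eg+1)]}}{n},$$ $l=n(eg+g+1)$, $$s_1=(a_1a_3-a_2^2)nl+a_1a_2(en^2+2bl)-a_1^2\left(\frac{b^2l}{n}+2ben+bmg-mn\right),$$ $$s_2=(a_2^3-3a_1a_2a_3)nl+(2a_1^2a_3-a_1a_2^2)(en^2+2bl)+a_1^2a_2\left(\frac{b^2l}{n}+2ben+bmg-mn\right)-2a_1^3eb^2,$$ and $w=s_1\sqrt{\Delta}+s_2$. Suppose $n>\frac{(eg+1)b^2+m(eg+1)b}{me}$ and $a_4<a\le\frac{e(m+b)}{b}$. Let $y_1=\frac{-a_2+\sqrt{\Delta}}{2a_1}$ and $x_1=\frac{a(1+gy_1)}{e+(eg+1)y_1}$, so that $E_1=(x_1,y_1)$ is an endemic equilibrium of the system. Then: (1) if $w<0$, $E_1$ is a stable node or focus; (2) if $w=0$, $E_1$ is a weak center; (3) if $w>0$, $E_1$ is an unstable node or focus.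
   Context: The system is a rescaled SIR epidemic model with saturated infection rate and saturated treatment rate. A ''weak center'' means an equilibrium whose Jacobian has zero trace and positive determinant (purely imaginary eigenvalues). *)

(* Defs.v *)
From Stdlib Require Import Reals.
From Coquelicot Require Import Coquelicot.
Open Scope R_scope.

Definition sir_f1 (a e g : R) (x y : R) : R := a - e * x - x * y / (1 + g * y).
Definition sir_f2 (b g m n : R) (x y : R) : R :=
  x * y / (1 + g * y) - y - m * y / (b + n * y).

Definition jac11 (a e g : R) (x y : R) : R := Derive (fun u => sir_f1 a e g u y) x.
Definition jac12 (a e g : R) (x y : R) : R := Derive (fun v => sir_f1 a e g x v) y.
Definition jac21 (b g m n : R) (x y : R) : R := Derive (fun u => sir_f2 b g m n u y) x.
Definition jac22 (b g m n : R) (x y : R) : R := Derive (fun v => sir_f2 b g m n x v) y.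

Definition jac_trace (a b e g m n x y : R) : R :=
  jac11 a e g x y + jac22 b g m n x y.
Definition jac_det (a b e g m n x y : R) : R :=
  jac11 a e g x y * jac22 b g m n x y - jac12 a e g x y * jac21 b g m n x y.

(* Classification of an equilibrium (x,y) via its Jacobian J:
   stable node or focus  <-> both eigenvalues have negative real part, i.e. det J > 0, tr J < 0;
   unstable node or focus <-> both eigenvalues have positive real part, i.e. det J > 0, tr J > 0;
   weak center (as defined in the paper) <-> tr J = 0, det J > 0. *)
Definition is_equilibrium (a b e g m n x y : R) : Prop :=
  sir_f1 a e g x y = 0 /\ sir_f2 b g m n x y = 0.

Definition stable_node_or_focus (a b e g m n x y : R) : Prop :=
  is_equilibrium a b e g m n x y /\
  jac_det a b e g m n x y > 0 /\ jac_trace a b e g m n x y < 0.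
Definition unstable_node_or_focus (a b e g m n x y : R) : Prop :=
  is_equilibrium a b e g m n x y /\
  jac_det a b e g m n x y > 0 /\ jac_trace a b e g m n x y > 0.
Definition weak_center (a b e g m n x y : R) : Prop :=
  is_equilibrium a b e g m n x y /\
  jac_det a b e g m n x y > 0 /\ jac_trace a b e g m n x y = 0.

(* Main.v *)
Require Import Defs.
From Stdlib Require Import Reals Lra Psatz.
From Coquelicot Require Import Coquelicot.
From Stdlib Require Import Reals Lra Psatz.
Open Scope R_scope.

Lemma poly_id (a1 a2 a3 n l B K e b y : R) :
  let T := -(l*n*y^3 + B*y^2 + K*y + e*b^2) in
  let s1 := (a1 * a3 - a2 ^ 2) * n * l + a1 * a2 * B - a1 ^ 2 * K in
  let s2 := (a2 ^ 3 - 3 * a1 * a2 * a3) * n * l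
            + (2 * a1 ^ 2 * a3 - a1 * a2 ^ 2) * B
            + a1 ^ 2 * a2 * K - 2 * a1 ^ 3 * e * b ^ 2 in
  2*a1^3*T - (s1*(2*a1*y+a2)+s2) = (a1*y^2+a2*y+a3)*((-2*a1^2*l*n)*y + (-2*a1^2*B + 2*a1*l*n*a2)).
Proof. intros. unfold T, s1, s2. ring. Qed.

Lemma trace_id (a b e g m n y : R) : 0 < n -> 0 < 1+g*y -> 0 < b+n*y -> 0 < e+(e*g+1)*y ->
  a*(b+n*y) = (e+(e*g+1)*y)*(b+n*y+m) ->
  let l := n * (e * g + g + 1) in
  let K := b ^ 2 * l / n + 2 * b * e * n + b * m * g - m * n in
  (-e - y/(1+g*y)) + ((a*(1+g*y)/(e+(e*g+1)*y))/(1+g*y)^2 - 1 - m*b/(b+n*y)^2)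
  = -(l*n*y^3 + (e*n^2+2*b*l)*y^2 + K*y + e*b^2) / ((1+g*y)*(b+n*y)^2).
Proof.
  intros Hn Hh Hr Ht E l K.
  assert (Ea : a = (e+(e*g+1)*y)*(b+n*y+m)/(b+n*y)) by (field_simplify_eq; [lra|lra]).
  subst a. unfold K, l. field. repeat split; lra.
Qed.

Lemma det_id (a b e g m n y : R) : 0 < n -> 0 < 1+g*y -> 0 < b+n*y -> 0 < e+(e*g+1)*y ->
  a*(b+n*y) = (e+(e*g+1)*y)*(b+n*y+m) ->
  let x := a*(1+g*y)/(e+(e*g+1)*y) in
  (-e - y/(1+g*y)) * (x/(1+g*y)^2 - 1 - m*b/(b+n*y)^2) - (-x/(1+g*y)^2) * (y/(1+g*y))
  = y * (2*((e*g+1)*n)*y + ((b + m) * (e * g + 1) + n * (e - a))) / ((1+g*y)*(b+n*y)).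
Proof.
  intros Hn Hh Hr Ht E x.
  assert (Ea : a = (e+(e*g+1)*y)*(b+n*y+m)/(b+n*y)) by (field_simplify_eq; [lra|lra]).
  unfold x. subst a. field. repeat split; lra.
Qed.
Lemma derivs (a b e g m n x y : R) : 1 + g*y <> 0 -> b + n*y <> 0 ->
  jac11 a e g x y = -e - y/(1+g*y) /\
  jac12 a e g x y = -x/(1+g*y)^2 /\
  jac21 b g m n x y = y/(1+g*y) /\
  jac22 b g m n x y = x/(1+g*y)^2 - 1 - m*b/(b+n*y)^2.
Proof.
  intros Hh Hr.
  split; [|split; [|split]].
  - unfold jac11, sir_f1. apply is_derive_unique. auto_derive; [auto|field; auto].
  - unfold jac12, sir_f1. apply is_derive_unique. auto_derive; [auto|field; auto].
  - unfold jac21, sir_f2. apply is_derive_unique. auto_derive; [auto|field; auto].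
  - unfold jac22, sir_f2. apply is_derive_unique. auto_derive; [auto|field; auto].
Qed.

Theorem theorem2p4 (a b e g m n : R) :
  0 < a -> 0 < b -> 0 < g -> 0 < m -> 0 < n -> 0 < e -> e < 1 ->
  let a1 := (e * g + 1) * n in
  let a2 := (b + m) * (e * g + 1) + n * (e - a) in
  let a3 := e * (b + m) - a * b in
  let Delta := a2 ^ 2 - 4 * a1 * a3 in
  let a4 := ((e * n - (b - m) * (e * g + 1))
             + sqrt (4 * m * (e * g + 1) * (n * e - b * (e * g + 1)))) / n in
  let l := n * (e * g + g + 1) in
  let K := b ^ 2 * l / n + 2 * b * e * n + b * m * g - m * n in
  let s1 := (a1 * a3 - a2 ^ 2) * n * l + a1 * a2 * (e * n ^ 2 + 2 * b * l)
            - a1 ^ 2 * K in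
  let s2 := (a2 ^ 3 - 3 * a1 * a2 * a3) * n * l
            + (2 * a1 ^ 2 * a3 - a1 * a2 ^ 2) * (e * n ^ 2 + 2 * b * l)
            + a1 ^ 2 * a2 * K - 2 * a1 ^ 3 * e * b ^ 2 in
  let w := s1 * sqrt Delta + s2 in
  n > ((e * g + 1) * b ^ 2 + m * (e * g + 1) * b) / (m * e) ->
  a4 < a -> a <= e * (m + b) / b ->
  let y1 := (- a2 + sqrt Delta) / (2 * a1) in
  let x1 := a * (1 + g * y1) / (e + (e * g + 1) * y1) in
  (w < 0 -> stable_node_or_focus a b e g m n x1 y1) /\
  (w = 0 -> weak_center a b e g m n x1 y1) /\
  (w > 0 -> unstable_node_or_focus a b e g m n x1 y1).
Proof.
  intros Ha Hb Hg Hm Hn He He1 a1 a2 a3 Delta a4 l K s1 s2 w Hn' Ha4 Ha' y1 x1.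
  set (k := e*g+1) in *.
  assert (Hk : 0 < k) by (unfold k; nra).
  assert (Hme : 0 < m*e) by nra.
  assert (Hn2 : k*b^2 + m*k*b < n*(m*e)).
  { assert (Hx : k*b^2 + m*k*b = ((k*b^2 + m*k*b)/(m*e))*(m*e)) by (field; lra).
    rewrite Hx. nra. }
  assert (Hq0 : 0 < n*e - b*k) by nra.
  set (q := 4 * m * k * (n * e - b * k)) in *.
  assert (Hq : 0 <= q) by (unfold q; nra).
  set (sq := sqrt q) in *.
  assert (Hsq : sq * sq = q) by (apply sqrt_sqrt; lra).
  assert (Hsq0 : 0 <= sq) by apply sqrt_pos.
  assert (Hsq2 : 2*k*b < sq).
  { assert (4*k^2*b^2 < q) by (unfold q; nra). nra. }
  assert (Ha4' : n*a - (e*n - (b-m)*k) > sq).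
  { unfold a4 in Ha4. 
    assert (Hx : (e * n - (b - m) * k + sq) = ((e * n - (b - m) * k + sq)/n)*n) by (field; lra).
    nra. }
  assert (HD : Delta = (n*a - (e*n - (b-m)*k))^2 - q) by (unfold Delta, a1, a2, a3, q; ring).
  assert (HDp : 0 < Delta) by nra.
  assert (Ha2 : a2 < 0) by (unfold a2; nra).
  assert (Ha3 : 0 <= a3).
  { unfold a3. assert (Hx : e*(m+b) = (e*(m+b)/b)*b) by (field; lra). nra. }
  set (s := sqrt Delta) in *.
  assert (Hs : s * s = Delta) by (apply sqrt_sqrt; lra).
  assert (Hs0 : 0 < s) by (apply sqrt_lt_R0; lra).
  assert (Ha1 : 0 < a1) by (unfold a1; nra).
  assert (Hy : 0 < y1) by (unfold y1; apply Rdiv_lt_0_compat; lra).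
  assert (HP : a1*y1^2 + a2*y1 + a3 = 0).
  { unfold y1. field_simplify_eq; [|lra]. unfold Delta in Hs. nra. }
  assert (HS : s = 2*a1*y1 + a2) by (unfold y1; field; lra).
  assert (E : a*(b+n*y1) = (e+k*y1)*(b+n*y1+m)).
  { unfold a1, a2, a3 in HP. nra. }
  clearbody y1. 
  assert (Hh : 0 < 1+g*y1) by nra.
  assert (Hr : 0 < b+n*y1) by nra.
  assert (Ht : 0 < e+k*y1) by nra.
  destruct (derivs a b e g m n x1 y1) as [J11 [J12 [J21 J22]]]; try lra.
  assert (Eq : is_equilibrium a b e g m n x1 y1).
  { unfold is_equilibrium, sir_f1, sir_f2, x1. unfold k in *. split.
    - field. split; lra.
    - assert (Ea : a = (e+(e*g+1)*y1)*(b+n*y1+m)/(b+n*y1)) by (field_simplify_eq; [lra|lra]).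
      rewrite Ea. field. repeat split; lra. }
  assert (Hdet : jac_det a b e g m n x1 y1 > 0).
  { unfold jac_det. rewrite J11, J12, J21, J22. unfold x1, k.
    rewrite (det_id a b e g m n y1); try (fold k; lra).
    fold k. fold a1. fold a2. rewrite <- HS.
    apply Rdiv_lt_0_compat; nra. }
  assert (Htr : jac_trace a b e g m n x1 y1 = w / (2*a1^3*((1+g*y1)*(b+n*y1)^2))).
  { unfold jac_trace. rewrite J11, J22. unfold x1, k.
    rewrite (trace_id a b e g m n y1); try (fold k; lra).
    fold l K.
    assert (Hw : w = 2*a1^3*(-(l*n*y1^3 + (e*n^2+2*b*l)*y1^2 + K*y1 + e*b^2))).
    { pose proof (poly_id a1 a2 a3 n l (e*n^2+2*b*l) K e b y1) as P. cbv zeta in P.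
      rewrite HP, Rmult_0_l in P.
      unfold w, s1, s2. rewrite HS. lra. }
    rewrite Hw. field. repeat split; nra. }
  assert (Hden : 0 < 2*a1^3*((1+g*y1)*(b+n*y1)^2)).
  { apply Rmult_lt_0_compat. apply Rmult_lt_0_compat; [lra|apply pow_lt; lra]. apply Rmult_lt_0_compat; [lra|apply pow_lt; lra]. }
  split; [|split]; intro Hw.
  - split; [exact Eq|split; [exact Hdet|]]. rewrite Htr. 
    apply Rdiv_neg_pos; lra.
  - split; [exact Eq|split; [exact Hdet|]]. rewrite Htr, Hw. field. lra.
  - split; [exact Eq|split; [exact Hdet|]]. rewrite Htr. apply Rdiv_lt_0_compat; lra.
Qed.
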